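(* Fix $k\in\mathcal{K}$ and an SU index $k'$. Consider problem (T1): maximize over $p_{k,k'}\ge0$, $b_{k,k'}\ge0$, $q_k\ge0$, $w_k\ge0$ $$EE_k=\frac{b_{k,k'}\log_2\!\Big(1+\frac{p_{k,k'}g_{k,k'}}{b_{k,k'}N_0}\Big)}{\frac{p_{k,k'}}{\xi}+\frac{q_k}{\xi}}$$ subject to $b_{k,k'}+w_k\le W^k_{MC}$ and $w_k\log_2\!\big(1+\frac{q_kh_k}{w_kN_0}\big)\ge R^k_{MC}$. Then (T1) is equivalent (same optimal value, with optimal $(p_{k,k'},w_k)$ corresponding) to the problem (T2): maximize over $p_{k,k'}\ge0$, $w_k\ge0$ $$EE_k=\frac{(W^k_{MC}-w_k)\log_2\!\Big(1+\frac{p_{k,k'}g_{k,k'}}{(W^k_{MC}-w_k)N_0}\Big)}{\frac{p_{k,k'}}{\xi}+\big(2^{R^k_{MC}/w_k}-1\big)\frac{w_kN_0}{h_k\xi}},$$ and the objective $EE_k$ of (T2) is strictly and jointly quasi-concave in $(p_{k,k'},w_k)$; hence (T2) is a quasi-concave maximization problem.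
   Context: Constants: $N_0>0$ noise spectral density, $\xi\in(0,1]$ power amplifier efficiency; for the macro user $k$: licensed bandwidth $W^k_{MC}>0$, minimum rate requirement $R^k_{MC}>0$, channel gain $h_k>0$ from the small-cell base station to MU $k$, and $g_{k,k'}>0$ the channel gain to small-cell user $k'$ on MU $k$'s bandwidth. The quantity $EE_k$ is the ''trading energy efficiency'' of MU $k$: rate gained by the small cell using part $b_{k,k'}$ of MU $k$'s band for SU $k'$, divided by the power spent on SU $k'$ and on serving MU $k$ with bandwidth $w_k$ and power $q_k$. Expressions are considered where defined, i.e. $0<w_k$ and $w_k\le W^k_{MC}$ (with $b\log_2(1+x/b)$ taken as $0$ at $b=0$). *)

(* Defs.v *)
From Stdlib Require Import Reals.
Open Scope R_scope.

Definition log2 (x : R) : R := ln x / ln 2.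

Definition rate (N0 gain b p : R) : R :=
  if Req_EM_T b 0 then 0 else b * log2 (1 + p * gain / (b * N0)).

Definition EE1 (N0 xi g p b q : R) : R :=
  rate N0 g b p / (p / xi + q / xi).

(* Feasible set of (T1) (w = w_k; 0 < w required for the constraint to be defined) *)
Definition feasible1 (N0 W RMC h p b q w : R) : Prop :=
  0 <= p /\ 0 <= b /\ 0 <= q /\ 0 < w /\
  b + w <= W /\ w * log2 (1 + q * h / (w * N0)) >= RMC.

Definition EE2 (N0 xi W RMC h g p w : R) : R :=
  rate N0 g (W - w) p /
  (p / xi + (Rpower 2 (RMC / w) - 1) * (w * N0 / (h * xi))).

(* Feasible set of (T2) (0 < w <= W, where the objective is defined) *)
Definition feasible2 (W p w : R) : Prop := 0 <= p /\ 0 < w /\ w <= W.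

(* The q_k corresponding to w_k: the power meeting the MU rate exactly *)
Definition qopt (N0 RMC h w : R) : R := (Rpower 2 (RMC / w) - 1) * (w * N0 / h).

Definition is_max1 (N0 xi W RMC h g p b q w : R) : Prop :=
  feasible1 N0 W RMC h p b q w /\
  forall p' b' q' w', feasible1 N0 W RMC h p' b' q' w' ->
    EE1 N0 xi g p' b' q' <= EE1 N0 xi g p b q.

Definition is_max2 (N0 xi W RMC h g p w : R) : Prop :=
  feasible2 W p w /\
  forall p' w', feasible2 W p' w' ->
    EE2 N0 xi W RMC h g p' w' <= EE2 N0 xi W RMC h g p w.

Definition quasiconcave_on (S : R -> R -> Prop) (f : R -> R -> R) : Prop :=
  forall x1 y1 x2 y2 t, S x1 y1 -> S x2 y2 -> 0 <= t <= 1 ->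
    Rmin (f x1 y1) (f x2 y2) <= f (t * x1 + (1 - t) * x2) (t * y1 + (1 - t) * y2).

Definition strictly_quasiconcave_on (S : R -> R -> Prop) (f : R -> R -> R) : Prop :=
  forall x1 y1 x2 y2 t, S x1 y1 -> S x2 y2 -> (x1, y1) <> (x2, y2) -> 0 < t < 1 ->
    Rmin (f x1 y1) (f x2 y2) < f (t * x1 + (1 - t) * x2) (t * y1 + (1 - t) * y2).

(* Main.v *)
Require Import Defs.
From Stdlib Require Import Reals Lra Psatz.
Open Scope R_scope.

Lemma exp_diff_ln z m : 0 < z -> 0 < m -> exp (ln z - ln m) = z / m.
Proof.
  intros Hz Hm. unfold Rminus. rewrite exp_plus, exp_Ropp, !exp_ln by lra.
  unfold Rdiv; reflexivity.
Qed.

Lemma ln_tangent z m : 0 < z -> 0 < m -> ln z <= ln m + z / m - 1.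
Proof.
  intros Hz Hm. pose proof (exp_ineq1_le (ln z - ln m)) as H.
  rewrite exp_diff_ln in H by lra. lra.
Qed.

Lemma ln_tangent_strict z m : 0 < z -> 0 < m -> z <> m -> ln z < ln m + z / m - 1.
Proof.
  intros Hz Hm Hne.
  assert (ln z - ln m <> 0).
  { intro E. apply Hne. rewrite <- (exp_ln z), <- (exp_ln m) by lra. f_equal. lra. }
  pose proof (exp_ineq1 _ H) as H1.
  rewrite exp_diff_ln in H1 by lra. lra.
Qed.

Lemma exp_tangent x y : exp y * (1 + x - y) <= exp x.
Proof.
  pose proof (exp_ineq1_le (x - y)).
  replace (exp x) with (exp y * exp (x - y)).
  2:{ rewrite <- exp_plus. f_equal. ring. }
  pose proof (exp_pos y). nra.
Qed.

Lemma exp_tangent_strict x y : x <> y -> exp y * (1 + x - y) < exp x.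
Proof.
  intro Hne. assert (x - y <> 0) by lra.
  pose proof (exp_ineq1 _ H).
  replace (exp x) with (exp y * exp (x - y)).
  2:{ rewrite <- exp_plus. f_equal. ring. }
  pose proof (exp_pos y). nra.
Qed.


Lemma div_nonneg a b : 0 <= a -> 0 < b -> 0 <= a / b.
Proof. intros. unfold Rdiv. apply Rmult_le_pos; [lra|]. left; apply Rinv_0_lt_compat; lra. Qed.

Lemma mean_id b1 b2 z1 z2 m : 0 < m -> b1 * z1 + b2 * z2 = (b1 + b2) * m ->
  b1 * (ln m + z1 / m - 1) + b2 * (ln m + z2 / m - 1) = (b1 + b2) * ln m.
Proof.
  intros Hm E.
  assert (b1 * (z1/m) + b2 * (z2/m) = b1 + b2).
  { replace (b1 * (z1/m) + b2 * (z2/m)) with ((b1*z1 + b2*z2)/m) by (field; lra).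
    rewrite E. field. lra. }
  lra.
Qed.

Lemma H_super b1 b2 x1 x2 : 0 < b1 -> 0 < b2 -> 0 <= x1 -> 0 <= x2 ->
  b1 * ln (1 + x1 / b1) + b2 * ln (1 + x2 / b2) <=
  (b1 + b2) * ln (1 + (x1 + x2) / (b1 + b2)).
Proof.
  intros. set (m := 1 + (x1 + x2) / (b1 + b2)).
  assert (0 <= (x1+x2)/(b1+b2)) by (apply div_nonneg; lra).
  assert (Hm : 0 < m) by (unfold m; lra).
  assert (0 <= x1 / b1) by (apply div_nonneg; lra).
  assert (0 <= x2 / b2) by (apply div_nonneg; lra).
  pose proof (ln_tangent (1 + x1/b1) m ltac:(lra) Hm) as T1.
  pose proof (ln_tangent (1 + x2/b2) m ltac:(lra) Hm) as T2.
  apply Rmult_le_compat_l with (r := b1) in T1; [|lra].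
  apply Rmult_le_compat_l with (r := b2) in T2; [|lra].
  rewrite <- (mean_id b1 b2 (1 + x1/b1) (1 + x2/b2) m Hm). lra.
  unfold m. field. lra.
Qed.

Lemma H_super_strict b1 b2 x1 x2 : 0 < b1 -> 0 < b2 -> 0 <= x1 -> 0 <= x2 ->
  x1 * b2 <> x2 * b1 ->
  b1 * ln (1 + x1 / b1) + b2 * ln (1 + x2 / b2) <
  (b1 + b2) * ln (1 + (x1 + x2) / (b1 + b2)).
Proof.
  intros ? ? ? ? Hne. set (m := 1 + (x1 + x2) / (b1 + b2)).
  assert (0 <= (x1+x2)/(b1+b2)) by (apply div_nonneg; lra).
  assert (Hm : 0 < m) by (unfold m; lra).
  assert (0 <= x1 / b1) by (apply div_nonneg; lra).
  assert (0 <= x2 / b2) by (apply div_nonneg; lra).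
  assert (Hz : 1 + x1 / b1 <> m).
  { unfold m. intro E. apply Hne.
    assert (E2 : x1 / b1 = (x1+x2)/(b1+b2)) by lra.
    apply (f_equal (fun y => y * b1 * (b1 + b2))) in E2.
    field_simplify in E2; try lra. }
  pose proof (ln_tangent_strict (1 + x1/b1) m ltac:(lra) Hm Hz) as T1.
  pose proof (ln_tangent (1 + x2/b2) m ltac:(lra) Hm) as T2.
  apply Rmult_lt_compat_l with (r := b1) in T1; [|lra].
  apply Rmult_le_compat_l with (r := b2) in T2; [|lra].
  rewrite <- (mean_id b1 b2 (1 + x1/b1) (1 + x2/b2) m Hm). lra.
  unfold m. field. lra.
Qed.

Lemma P_sub a1 a2 w1 w2 : 0 < w1 -> 0 < w2 ->
  (w1 + w2) * exp ((a1 + a2) / (w1 + w2)) <= w1 * exp (a1 / w1) + w2 * exp (a2 / w2).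
Proof.
  intros. set (M := exp ((a1 + a2) / (w1 + w2))).
  pose proof (exp_tangent (a1/w1) ((a1 + a2) / (w1 + w2))) as T1.
  pose proof (exp_tangent (a2/w2) ((a1 + a2) / (w1 + w2))) as T2.
  fold M in T1, T2.
  apply Rmult_le_compat_l with (r := w1) in T1; [|lra].
  apply Rmult_le_compat_l with (r := w2) in T2; [|lra].
  assert (E : w1 * (M * (1 + a1 / w1 - (a1 + a2) / (w1 + w2))) + w2 * (M * (1 + a2 / w2 - (a1 + a2) / (w1 + w2))) = (w1 + w2) * M).
  { field. lra. }
  lra.
Qed.

Lemma P_sub_strict a1 a2 w1 w2 : 0 < w1 -> 0 < w2 -> a1 * w2 <> a2 * w1 ->
  (w1 + w2) * exp ((a1 + a2) / (w1 + w2)) < w1 * exp (a1 / w1) + w2 * exp (a2 / w2).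
Proof.
  intros ? ? Hne. set (M := exp ((a1 + a2) / (w1 + w2))).
  assert (Hz : a1 / w1 <> (a1 + a2) / (w1 + w2)).
  { intro E. apply Hne.
    apply (f_equal (fun y => y * w1 * (w1 + w2))) in E.
    field_simplify in E; try lra. }
  pose proof (exp_tangent_strict (a1/w1) ((a1 + a2) / (w1 + w2)) Hz) as T1.
  pose proof (exp_tangent (a2/w2) ((a1 + a2) / (w1 + w2))) as T2.
  fold M in T1, T2.
  apply Rmult_lt_compat_l with (r := w1) in T1; [|lra].
  apply Rmult_le_compat_l with (r := w2) in T2; [|lra].
  assert (E : w1 * (M * (1 + a1 / w1 - (a1 + a2) / (w1 + w2))) + w2 * (M * (1 + a2 / w2 - (a1 + a2) / (w1 + w2))) = (w1 + w2) * M).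
  { field. lra. }
  lra.
Qed.

Lemma ln2_pos : 0 < ln 2.
Proof. rewrite <- ln_1. apply ln_increasing; lra. Qed.

Lemma div_add_le a b c L : 0 < L -> a + b <= c -> a / L + b / L <= c / L.
Proof. intros. replace (a/L + b/L) with ((a+b)/L) by (field; lra).
  unfold Rdiv. apply Rmult_le_compat_r; [left; apply Rinv_0_lt_compat; lra|lra]. Qed.
Lemma div_add_lt a b c L : 0 < L -> a + b < c -> a / L + b / L < c / L.
Proof. intros. replace (a/L + b/L) with ((a+b)/L) by (field; lra).
  unfold Rdiv. apply Rmult_lt_compat_r; [apply Rinv_0_lt_compat; lra|lra]. Qed.

Section S.
Variables (N0 g : R).
Hypotheses (HN0 : 0 < N0) (Hg : 0 < g).

Lemma rate_pos_eq b p : 0 < b ->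
  rate N0 g b p = b * ln (1 + (p * (g / N0)) / b) / ln 2.
Proof.
  intros Hb. unfold rate. destruct (Req_EM_T b 0); [lra|].
  unfold log2. replace (p * g / (b * N0)) with (p * (g / N0) / b) by (field; lra).
  unfold Rdiv; ring.
Qed.

Lemma ln_ge0 x : 1 <= x -> 0 <= ln x.
Proof. intros. destruct (Req_dec x 1). subst; rewrite ln_1; lra.
  left. rewrite <- ln_1. apply ln_increasing; lra. Qed.

Lemma ln_gt0 x : 1 < x -> 0 < ln x.
Proof. intros. rewrite <- ln_1. apply ln_increasing; lra. Qed.

Lemma ln_mono x y : 0 < x -> x <= y -> ln x <= ln y.
Proof. intros. destruct (Req_dec x y). subst; lra. left; apply ln_increasing; lra. Qed.

Lemma gN0_pos : 0 < g / N0.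
Proof. unfold Rdiv. apply Rmult_lt_0_compat; [lra|]. apply Rinv_0_lt_compat; lra. Qed.

Lemma rate_nonneg b p : 0 <= b -> 0 <= p -> 0 <= rate N0 g b p.
Proof.
  intros Hb Hp. destruct (Req_dec b 0).
  - unfold rate. destruct (Req_EM_T b 0); [lra|contradiction].
  - rewrite rate_pos_eq by lra. pose proof gN0_pos. pose proof ln2_pos.
    apply div_nonneg; [|lra]. apply Rmult_le_pos; [lra|]. apply ln_ge0.
    assert (0 <= p * (g/N0) / b) by (apply div_nonneg; nra). lra.
Qed.

Lemma rate_pos b p : 0 < b -> 0 < p -> 0 < rate N0 g b p.
Proof.
  intros Hb Hp. rewrite rate_pos_eq by lra. pose proof gN0_pos. pose proof ln2_pos.
  unfold Rdiv at 1. apply Rmult_lt_0_compat; [|apply Rinv_0_lt_compat; lra].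
  apply Rmult_lt_0_compat; [lra|]. apply ln_gt0.
  assert (0 < p * (g/N0) / b). { unfold Rdiv. apply Rmult_lt_0_compat. nra. apply Rinv_0_lt_compat; lra. }
  lra.
Qed.

Lemma rate_hom t b p : 0 <= t -> rate N0 g (t * b) (t * p) = t * rate N0 g b p.
Proof.
  intros Ht. unfold rate.
  destruct (Req_EM_T (t*b) 0) as [E|E]; destruct (Req_EM_T b 0) as [E'|E'].
  - ring.
  - assert (t = 0) by (apply Rmult_integral in E; lra). subst; ring.
  - subst. exfalso. apply E; ring.
  - assert (t <> 0) by (intro; subst; apply E; ring).
    replace (t * p * g / (t * b * N0)) with (p * g / (b * N0)) by (field; lra). ring.
Qed.

Lemma rate_mono_p b p p' : 0 <= b -> 0 <= p -> p <= p' -> rate N0 g b p <= rate N0 g b p'.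
Proof.
  intros Hb Hp Hpp. destruct (Req_dec b 0).
  - unfold rate. destruct (Req_EM_T b 0); [lra|contradiction].
  - rewrite !rate_pos_eq by lra. pose proof gN0_pos. pose proof ln2_pos.
    unfold Rdiv at 1 3. apply Rmult_le_compat_r; [left; apply Rinv_0_lt_compat; lra|].
    apply Rmult_le_compat_l; [lra|]. apply ln_mono.
    assert (0 <= p * (g/N0) / b) by (apply div_nonneg; nra). lra.
    assert (p * (g/N0) / b <= p' * (g/N0) / b).
    { unfold Rdiv. apply Rmult_le_compat_r. left; apply Rinv_0_lt_compat; lra. nra. }
    lra.
Qed.

Lemma rate_zero p : rate N0 g 0 p = 0.
Proof. unfold rate. destruct (Req_EM_T 0 0); [reflexivity|lra]. Qed.

Lemma rate_super b1 b2 p1 p2 : 0 <= b1 -> 0 <= b2 -> 0 <= p1 -> 0 <= p2 ->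
  rate N0 g b1 p1 + rate N0 g b2 p2 <= rate N0 g (b1 + b2) (p1 + p2).
Proof.
  intros. destruct (Req_dec b1 0) as [E1|E1]; destruct (Req_dec b2 0) as [E2|E2].
  - subst. rewrite Rplus_0_r, !rate_zero. lra.
  - subst. rewrite rate_zero, Rplus_0_l. rewrite Rplus_0_l.
    apply rate_mono_p; lra.
  - subst. rewrite rate_zero, Rplus_0_r. rewrite Rplus_0_r.
    apply rate_mono_p; lra.
  - rewrite !rate_pos_eq by lra. pose proof gN0_pos. pose proof ln2_pos.
    replace ((p1 + p2) * (g / N0)) with (p1 * (g/N0) + p2 * (g/N0)) by ring.
    pose proof (H_super b1 b2 (p1 * (g/N0)) (p2 * (g/N0)) ltac:(lra) ltac:(lra) ltac:(nra) ltac:(nra)).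
    apply div_add_le; lra.
Qed.

Lemma rate_super_strict b1 b2 p1 p2 : 0 < b1 -> 0 < b2 -> 0 <= p1 -> 0 <= p2 ->
  p1 * b2 <> p2 * b1 ->
  rate N0 g b1 p1 + rate N0 g b2 p2 < rate N0 g (b1 + b2) (p1 + p2).
Proof.
  intros. rewrite !rate_pos_eq by lra. pose proof gN0_pos. pose proof ln2_pos.
  replace ((p1 + p2) * (g / N0)) with (p1 * (g/N0) + p2 * (g/N0)) by ring.
  assert (p1 * (g/N0) * b2 <> p2 * (g/N0) * b1).
  { intro E. apply H3. apply (Rmult_eq_reg_r (g/N0)); [|lra]. lra. }
  pose proof (H_super_strict b1 b2 (p1 * (g/N0)) (p2 * (g/N0)) ltac:(lra) ltac:(lra) ltac:(nra) ltac:(nra) H6).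
  apply div_add_lt; lra.
Qed.

End S.

Definition Qf (RMC w : R) := (Rpower 2 (RMC / w) - 1) * w.

Lemma Rpower_gt1 RMC w : 0 < RMC -> 0 < w -> 1 < Rpower 2 (RMC / w).
Proof.
  intros. unfold Rpower. rewrite <- exp_0. apply exp_increasing.
  pose proof ln2_pos. assert (0 < RMC / w) by (unfold Rdiv; apply Rmult_lt_0_compat; [lra|apply Rinv_0_lt_compat; lra]).
  nra.
Qed.

Lemma Q_pos RMC w : 0 < RMC -> 0 < w -> 0 < Qf RMC w.
Proof. intros. unfold Qf. pose proof (Rpower_gt1 RMC w H H0). nra. Qed.

Lemma Q_eq RMC w : 0 < w -> Qf RMC w = w * exp (RMC * ln 2 / w) - w.
Proof.
  intros. unfold Qf, Rpower. replace (RMC / w * ln 2) with (RMC * ln 2 / w) by (field; lra). ring.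
Qed.

Lemma Q_conv_strict RMC w1 w2 t : 0 < RMC -> 0 < w1 -> 0 < w2 -> 0 < t < 1 -> w1 <> w2 ->
  Qf RMC (t * w1 + (1 - t) * w2) < t * Qf RMC w1 + (1 - t) * Qf RMC w2.
Proof.
  intros HR H1 H2 Ht Hne. pose proof ln2_pos. set (a := RMC * ln 2).
  assert (Ha : 0 < a) by (unfold a; nra).
  assert (0 < t * w1 + (1-t) * w2) by nra.
  rewrite !Q_eq by lra. fold a.
  assert (Hn : t * a * ((1 - t) * w2) <> (1 - t) * a * (t * w1)).
  { intro E. assert (0 < t * (1 - t) * a) by (apply Rmult_lt_0_compat; nra).
    destruct (Rlt_dec w1 w2); nra. }
  pose proof (P_sub_strict (t*a) ((1-t)*a) (t*w1) ((1-t)*w2) ltac:(nra) ltac:(nra) Hn) as P.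
  replace (t * a + (1 - t) * a) with a in P by ring.
  replace (t * a / (t * w1)) with (a / w1) in P by (field; lra).
  replace ((1 - t) * a / ((1 - t) * w2)) with (a / w2) in P by (field; lra).
  lra.
Qed.

Lemma Q_conv RMC w1 w2 t : 0 < RMC -> 0 < w1 -> 0 < w2 -> 0 <= t <= 1 ->
  Qf RMC (t * w1 + (1 - t) * w2) <= t * Qf RMC w1 + (1 - t) * Qf RMC w2.
Proof.
  intros HR H1 H2 Ht.
  destruct (Req_dec t 0). { subst. replace (0 * w1 + (1 - 0) * w2) with w2 by ring. lra. }
  destruct (Req_dec t 1). { subst. replace (1 * w1 + (1 - 1) * w2) with w1 by ring. lra. }
  destruct (Req_dec w1 w2). { subst. replace (t * w2 + (1 - t) * w2) with w2 by ring. lra. }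
  left. apply Q_conv_strict; lra.
Qed.

Lemma le_div r N D : 0 < D -> r * D <= N -> r <= N / D.
Proof. intros. replace r with ((r * D) / D) by (field; lra).
  unfold Rdiv. apply Rmult_le_compat_r; [left; apply Rinv_0_lt_compat; lra|lra]. Qed.
Lemma lt_div r N D : 0 < D -> r * D < N -> r < N / D.
Proof. intros. replace r with ((r * D) / D) by (field; lra).
  unfold Rdiv. apply Rmult_lt_compat_r; [apply Rinv_0_lt_compat; lra|lra]. Qed.
Lemma div_le r N D : 0 < D -> r <= N / D -> r * D <= N.
Proof. intros. replace N with ((N / D) * D) by (field; lra). apply Rmult_le_compat_r; lra. Qed.

Lemma QC t N1 N2 N D1 D2 D : 0 <= t <= 1 -> 0 < D1 -> 0 < D2 -> 0 < D -> 0 <= N ->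
  t * N1 + (1 - t) * N2 <= N -> D <= t * D1 + (1 - t) * D2 ->
  Rmin (N1 / D1) (N2 / D2) <= N / D.
Proof.
  intros. set (r := Rmin (N1 / D1) (N2 / D2)).
  assert (r * D1 <= N1) by (apply div_le; [lra|apply Rmin_l]).
  assert (r * D2 <= N2) by (apply div_le; [lra|apply Rmin_r]).
  destruct (Rle_dec r 0).
  - assert (0 <= N / D) by (apply div_nonneg; lra). lra.
  - apply le_div; [lra|]. nra.
Qed.

Lemma QC_strict t N1 N2 N D1 D2 D : 0 < t < 1 -> 0 < D1 -> 0 < D2 -> 0 < D ->
  0 < N1 -> 0 < N2 ->
  t * N1 + (1 - t) * N2 <= N -> D <= t * D1 + (1 - t) * D2 ->
  (t * N1 + (1 - t) * N2 < N \/ D < t * D1 + (1 - t) * D2) ->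
  Rmin (N1 / D1) (N2 / D2) < N / D.
Proof.
  intros. set (r := Rmin (N1 / D1) (N2 / D2)).
  assert (r * D1 <= N1) by (apply div_le; [lra|apply Rmin_l]).
  assert (r * D2 <= N2) by (apply div_le; [lra|apply Rmin_r]).
  assert (0 < r).
  { unfold r. apply Rmin_case; unfold Rdiv; apply Rmult_lt_0_compat; try lra; apply Rinv_0_lt_compat; lra. }
  apply lt_div; [lra|]. destruct H7; nra.
Qed.

Lemma frac_le N1 N2 D1 D2 : 0 <= N1 -> N1 <= N2 -> 0 < D2 -> D2 <= D1 -> N1 / D1 <= N2 / D2.
Proof.
  intros. unfold Rdiv. apply Rmult_le_compat; try lra.
  left; apply Rinv_0_lt_compat; lra. apply Rinv_le_contravar; lra.
Qed.

Section Main.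
Variables (N0 xi W RMC h g : R).
Hypotheses (HN0 : 0 < N0) (Hxi : 0 < xi <= 1) (HW : 0 < W) (HR : 0 < RMC)
  (Hh : 0 < h) (Hg : 0 < g).

Definition K := N0 / (h * xi).
Lemma K_pos : 0 < K.
Proof. unfold K, Rdiv. apply Rmult_lt_0_compat; [lra|]. apply Rinv_0_lt_compat; nra. Qed.

Lemma EE2_eq p w : EE2 N0 xi W RMC h g p w =
  rate N0 g (W - w) p / (p / xi + Qf RMC w * K).
Proof. unfold EE2, Qf, K. f_equal. f_equal. field. lra. Qed.

Lemma D_pos p w : 0 <= p -> 0 < w -> 0 < p / xi + Qf RMC w * K.
Proof. intros. pose proof (Q_pos RMC w HR H0). pose proof K_pos.
  assert (0 <= p / xi) by (apply div_nonneg; lra). nra. Qed.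

Lemma qopt_eq w : qopt N0 RMC h w = Qf RMC w * (N0 / h).
Proof. unfold qopt, Qf. field. lra. Qed.

Lemma feas2_to_1 p w : feasible2 W p w -> feasible1 N0 W RMC h p (W - w) (qopt N0 RMC h w) w.
Proof.
  intros (Hp & Hw & HwW). unfold feasible1.
  pose proof (Q_pos RMC w HR Hw).
  assert (0 <= qopt N0 RMC h w).
  { rewrite qopt_eq. assert (0 < N0/h) by (unfold Rdiv; apply Rmult_lt_0_compat; [lra|apply Rinv_0_lt_compat; lra]). nra. }
  repeat split; try lra.
  replace (1 + qopt N0 RMC h w * h / (w * N0)) with (Rpower 2 (RMC / w)).
  2:{ unfold qopt. field. lra. }
  unfold log2, Rpower. rewrite ln_exp. right. pose proof ln2_pos. field. repeat split; lra.
Qed.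

Lemma EE_eq p w : 0 < w -> EE1 N0 xi g p (W - w) (qopt N0 RMC h w) = EE2 N0 xi W RMC h g p w.
Proof. intros. unfold EE1, EE2, qopt. f_equal. f_equal. field. lra. Qed.

Lemma q_ge p b q w : feasible1 N0 W RMC h p b q w -> qopt N0 RMC h w <= q.
Proof.
  intros (Hp & Hb & Hq & Hw & HbW & Hc). pose proof ln2_pos.
  set (z := 1 + q * h / (w * N0)) in *.
  assert (Hz0 : 0 <= q * h / (w * N0)) by (apply div_nonneg; nra).
  assert (Hz : 0 < z) by (unfold z; lra).
  assert (Hl : RMC / w * ln 2 <= ln z).
  { unfold log2 in Hc. replace (ln z) with ((w * (ln z / ln 2)) * (ln 2 / w)) by (field; lra).
    replace (RMC / w * ln 2) with (RMC * (ln 2 / w)) by (field; lra).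
    apply Rmult_le_compat_r; [|lra]. apply div_nonneg; lra. }
  assert (Hz2 : Rpower 2 (RMC / w) <= z).
  { unfold Rpower. destruct (Rle_dec (exp (RMC / w * ln 2)) z) as [|n]; [auto|].
    exfalso. assert (z < exp (RMC / w * ln 2)) by lra.
    pose proof (ln_increasing _ _ Hz H0). rewrite ln_exp in H1. lra. }
  unfold qopt. unfold z in Hz2.
  replace q with ((q * h / (w * N0)) * (w * N0 / h)) by (field; lra).
  apply Rmult_le_compat_r. apply div_nonneg; nra. lra.
Qed.

Lemma EE1_le_EE2 p b q w : feasible1 N0 W RMC h p b q w -> EE1 N0 xi g p b q <= EE2 N0 xi W RMC h g p w.
Proof.
  intros F. pose proof (q_ge _ _ _ _ F) as Hq.
  destruct F as (Hp & Hb & Hq0 & Hw & HbW & Hc).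
  rewrite <- EE_eq by lra. unfold EE1.
  apply frac_le.
  - apply rate_nonneg; lra.
  - pose proof (rate_super N0 g HN0 Hg b (W - w - b) p 0 Hb ltac:(lra) Hp ltac:(lra)).
    pose proof (rate_nonneg N0 g HN0 Hg (W - w - b) 0 ltac:(lra) ltac:(lra)).
    replace (b + (W - w - b)) with (W - w) in H by ring. rewrite Rplus_0_r in H. lra.
  - rewrite qopt_eq. pose proof (D_pos p w Hp Hw). unfold K in H.
    replace (Qf RMC w * (N0 / h) / xi) with (Qf RMC w * (N0 / (h * xi))) by (field; lra). lra.
  - assert (p/xi + qopt N0 RMC h w / xi <= p/xi + q/xi).
    { apply Rplus_le_compat_l. unfold Rdiv. apply Rmult_le_compat_r; [|lra]. left; apply Rinv_0_lt_compat; lra. }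
    lra.
Qed.

Lemma part_qc : quasiconcave_on (feasible2 W) (EE2 N0 xi W RMC h g).
Proof.
  intros x1 y1 x2 y2 t (Hx1 & Hy1 & HyW1) (Hx2 & Hy2 & HyW2) Ht.
  rewrite !EE2_eq. pose proof K_pos.
  assert (Hwc : 0 < t * y1 + (1 - t) * y2) by nra.
  apply (QC t); try (apply D_pos; nra).
  - lra.
  - apply rate_nonneg; nra.
  - replace (W - (t * y1 + (1 - t) * y2)) with (t * (W - y1) + (1 - t) * (W - y2)) by ring.
    rewrite <- (rate_hom N0 g HN0 t (W - y1) x1) by lra.
    rewrite <- (rate_hom N0 g HN0 (1 - t) (W - y2) x2) by lra.
    apply rate_super; nra.
  - pose proof (Q_conv RMC y1 y2 t HR Hy1 Hy2 Ht).
    assert (E : (t * x1 + (1 - t) * x2) / xi = t * (x1 / xi) + (1 - t) * (x2 / xi)) by (field; lra).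
    rewrite E. apply Rmult_le_compat_r with (r := K) in H0; [|lra]. nra.
Qed.

Lemma part_sqc : strictly_quasiconcave_on (fun p w => 0 < p /\ 0 < w < W) (EE2 N0 xi W RMC h g).
Proof.
  intros x1 y1 x2 y2 t (Hx1 & Hy1 & HyW1) (Hx2 & Hy2 & HyW2) Hne Ht.
  rewrite !EE2_eq. pose proof K_pos.
  assert (Hwc : 0 < t * y1 + (1 - t) * y2) by nra.
  assert (EW : W - (t * y1 + (1 - t) * y2) = t * (W - y1) + (1 - t) * (W - y2)) by ring.
  assert (EN : rate N0 g (t * (W - y1)) (t * x1) + rate N0 g ((1 - t) * (W - y2)) ((1 - t) * x2)
     = t * rate N0 g (W - y1) x1 + (1 - t) * rate N0 g (W - y2) x2).
  { rewrite (rate_hom N0 g HN0 t (W - y1) x1) by lra.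
    rewrite (rate_hom N0 g HN0 (1 - t) (W - y2) x2) by lra. reflexivity. }
  assert (E : (t * x1 + (1 - t) * x2) / xi = t * (x1 / xi) + (1 - t) * (x2 / xi)) by (field; lra).
  apply (QC_strict t); try (apply D_pos; nra).
  - lra.
  - apply rate_pos; lra.
  - apply rate_pos; lra.
  - rewrite EW, <- EN. apply rate_super; nra.
  - pose proof (Q_conv RMC y1 y2 t HR Hy1 Hy2 ltac:(lra)).
    rewrite E. apply Rmult_le_compat_r with (r := K) in H0; [|lra]. nra.
  - destruct (Req_dec y1 y2) as [Ey|Ey].
    + left. subst y2. assert (x1 <> x2) by (intro; subst; apply Hne; reflexivity).
      rewrite EW, <- EN. apply rate_super_strict; try nra.
      intro Z. assert (0 < t * (1 - t) * (W - y1)) by (apply Rmult_lt_0_compat; nra).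
      destruct (Rlt_dec x1 x2); nra.
    + right. pose proof (Q_conv_strict RMC y1 y2 t HR Hy1 Hy2 Ht Ey).
      rewrite E. apply Rmult_lt_compat_r with (r := K) in H0; [|lra]. nra.
Qed.

End Main.

Theorem theorem3 (N0 xi W RMC h g : R)
  (HN0 : 0 < N0) (Hxi : 0 < xi <= 1) (HW : 0 < W) (HR : 0 < RMC)
  (Hh : 0 < h) (Hg : 0 < g) :
  (forall v,
     (forall p b q w, feasible1 N0 W RMC h p b q w -> EE1 N0 xi g p b q <= v) <->
     (forall p w, feasible2 W p w -> EE2 N0 xi W RMC h g p w <= v)) /\
  (forall p b q w, is_max1 N0 xi W RMC h g p b q w -> is_max2 N0 xi W RMC h g p w) /\
  (forall p w, is_max2 N0 xi W RMC h g p w ->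
     is_max1 N0 xi W RMC h g p (W - w) (qopt N0 RMC h w) w) /\
  quasiconcave_on (feasible2 W) (EE2 N0 xi W RMC h g) /\
  strictly_quasiconcave_on (fun p w => 0 < p /\ 0 < w < W) (EE2 N0 xi W RMC h g).
Proof.
  assert (F12 : forall p b q w, feasible1 N0 W RMC h p b q w -> feasible2 W p w).
  { intros p b q w (? & ? & ? & ? & ? & ?). unfold feasible2. lra. }
  split; [|split; [|split; [|split]]].
  - intro v; split.
    + intros H p w F2. pose proof F2 as (_ & Hw & _).
      rewrite <- (EE_eq N0 xi W RMC h g Hxi Hh p w) by lra. apply (H p (W - w) (qopt N0 RMC h w) w). apply feas2_to_1; auto.
    + intros H p b q w F1. apply Rle_trans with (EE2 N0 xi W RMC h g p w).
      * apply (EE1_le_EE2 N0 xi W RMC h g HN0 Hxi HR Hh Hg p b q w F1).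
      * apply H. eapply F12; eauto.
  - intros p b q w [F1 M]. split; [eapply F12; eauto|].
    intros p' w' F2. pose proof F2 as (_ & Hw & _).
    rewrite <- (EE_eq N0 xi W RMC h g Hxi Hh p' w') by lra.
    apply Rle_trans with (EE1 N0 xi g p b q). apply (M p' (W - w') (qopt N0 RMC h w') w'). apply feas2_to_1; auto.
    apply (EE1_le_EE2 N0 xi W RMC h g HN0 Hxi HR Hh Hg p b q w F1).
  - intros p w [F2 M]. pose proof F2 as (_ & Hw & _). split; [apply feas2_to_1; auto|].
    intros p' b' q' w' F1. rewrite (EE_eq N0 xi W RMC h g Hxi Hh p w) by lra.
    apply Rle_trans with (EE2 N0 xi W RMC h g p' w').
    apply (EE1_le_EE2 N0 xi W RMC h g HN0 Hxi HR Hh Hg p' b' q' w' F1). apply M. eapply F12; eauto.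
  - apply part_qc; auto.
  - apply part_sqc; auto.
Qed.
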